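(* Let $k\ge 3$ and let $G=(V,E)$ be a $k$-uniform hyperstar of size $d\ge 2$, with $V=[n]$, $E=\{e_1,\ldots,e_d\}$, and heart the vertex $1$. Let $\mathcal L$ be its Laplacian tensor. Then a nonzero vector $\mathbf x\in\mathbb R^n$ is an H-eigenvector of $\mathcal L$ corresponding to the H-eigenvalue $1$ if and only if $x_1=0$ and $\sum_{i=1}^d\prod_{s\in e_i\setminus\{1\}}x_s=0$.
   Context: A $k$-uniform hyperstar of size $d$ is a hypergraph whose vertex set is a disjoint union $V=V_0\cup V_1\cup\cdots\cup V_d$ with $|V_0|=1$, $|V_1|=\cdots=|V_d|=k-1$, and edge set $\{V_0\cup V_i: i\in[d]\}$; the vertex in $V_0$ is the heart. For a $k$-uniform hypergraph with $d_i$ the number of edges containing $i$, the Laplacian tensor $\mathcal L=\mathcal D-\mathcal A$ ($\mathcal D$ diagonal with entries $d_i$, $\mathcal A$ with entries $\frac1{(k-1)!}$ at index tuples forming an edge and $0$ otherwise) satisfies $(\mathcal L\mathbf x^{k-1})_i=d_ix_i^{k-1}-\sum_{e\in E,\,i\in e}\prod_{s\in e\setminus\{i\}}x_s$. A nonzero $\mathbf x$ is an H-eigenvector for the H-eigenvalue $\lambda$ if $(\mathcal L\mathbf x^{k-1})_i=\lambda x_i^{k-1}$ for all $i\in[n]$. *)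

(* Defs.v *)
From mathcomp Require Import all_boot all_order all_algebra.
Set Implicit Arguments. Unset Strict Implicit. Unset Printing Implicit Defensive.
Import Order.TTheory GRing.Theory Num.Theory.
Local Open Scope ring_scope.

(* A k-uniform hypergraph on vertex set 'I_n is given by its family of edges
   E : 'I_d -> {set 'I_n} (edges e_1, ..., e_d, indexed by 'I_d). *)

Definition hdegree (n d : nat) (E : 'I_d -> {set 'I_n}) (i : 'I_n) : nat :=
  #|[set j | i \in E j]|.

(* (L x^{k-1})_i = d_i x_i^{k-1} - sum_{e in E, i in e} prod_{s in e \ {i}} x_s *)
Definition lap_act (R : comRingType) (n d : nat) (k : nat)
    (E : 'I_d -> {set 'I_n}) (x : 'I_n -> R) (i : 'I_n) : R :=
  (hdegree E i)%:R * x i ^+ k.-1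
  - \sum_(j : 'I_d | i \in E j) \prod_(s in E j :\ i) x s.

Definition is_H_eigenvector (R : comRingType) (n d k : nat)
    (E : 'I_d -> {set 'I_n}) (lam : R) (x : 'I_n -> R) : Prop :=
  (exists i, x i != 0) /\
  (forall i, lap_act k E x i = lam * x i ^+ k.-1).

(* E is a k-uniform hyperstar with heart h: every edge is {h} ∪ V_j with
   |V_j| = k-1, the V_j pairwise disjoint and not containing h, and
   V = {h} ∪ V_1 ∪ ... ∪ V_d. *)
Definition is_hyperstar (n d k : nat) (E : 'I_d -> {set 'I_n}) (h : 'I_n) : Prop :=
  [/\ forall j, h \in E j,
      forall j, #|E j| = k,
      forall j j', j != j' -> E j :&: E j' = [set h]
    & forall v, exists j, v \in E j].

(* Main.v *)
Require Import Defs.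
From mathcomp Require Import all_boot all_order all_algebra.
Import Order.TTheory GRing.Theory Num.Theory.
Local Open Scope ring_scope.
Set Implicit Arguments.

Lemma uniq_edge (k n d : nat) (E : 'I_d -> {set 'I_n.+1}) (v : 'I_n.+1) :
  is_hyperstar k E ord0 -> v != ord0 ->
  exists j0, [set j | v \in E j] = [set j0].
Proof.
case=> _ _ Hint Hcov Hv; have [j0 Hj0] := Hcov v; exists j0.
apply/setP=> j; rewrite !inE; apply/idP/eqP => [Hj|->//].
apply/eqP; apply: contraT => Hne.
have := Hint _ _ Hne; move/setP/(_ v); rewrite !inE Hj Hj0 /=.
by move=> H; move: Hv; rewrite -H.
Qed.

Lemma lap_vertex (R : comRingType) (k n d : nat) (E : 'I_d -> {set 'I_n.+1})
  (x : 'I_n.+1 -> R) (v : 'I_n.+1) (j0 : 'I_d) :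
  [set j | v \in E j] = [set j0] ->
  lap_act k E x v = x v ^+ k.-1 - \prod_(s in E j0 :\ v) x s.
Proof.
move=> Hs; rewrite /lap_act /hdegree Hs cards1 mul1r.
congr (_ - _).
rewrite (eq_bigl (fun j => j == j0)); first by rewrite big_pred1_eq.
by move=> j; move/setP: Hs => /(_ j); rewrite !inE.
Qed.

Theorem proposition5p3 (R : realFieldType) (k n d : nat)
    (E : 'I_d -> {set 'I_n.+1}) :
  (3 <= k)%N -> (2 <= d)%N -> is_hyperstar k E ord0 ->
  forall x : 'I_n.+1 -> R, (exists i, x i != 0) ->
  (is_H_eigenvector k E 1 x <->
   (x ord0 = 0 /\ \sum_(j < d) \prod_(s in E j :\ ord0) x s = 0)).
Proof.
move=> Hk Hd Hs x Hx.
have Hdeg0 : hdegree E ord0 = d.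
  rewrite /hdegree; case: Hs => H0 _ _ _.
  rewrite (_ : [set j | ord0 \in E j] = setT) ?cardsT ?card_ord //.
  by apply/setP=> j; rewrite !inE H0.
have Hm : (0 < k.-1)%N by move: Hk; case: (k) => [|[|[|]]].
split.
- case=> _ Heq.
  have Hj : forall j, x ord0 * \prod_(s in E j :\ ord0) x s = 0.
    move=> j.
    have : (0 < #|E j :\ ord0|)%N.
      case: Hs => H0 Hc _ _; have := cardsD1 ord0 (E j).
      rewrite Hc H0 => Hk'; move: Hk; rewrite Hk'; by case: #|_|.
    case/card_gt0P => v Hv.
    have Hv0 : v != ord0 by move: Hv; rewrite !inE => /andP[].
    have [j0 Hj0] := @uniq_edge _ _ _ E v Hs Hv0.
    have Hvj : v \in E j by move: Hv; rewrite !inE => /andP[].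
    have Ej : j0 = j.
      by move/setP: Hj0 => /(_ j); rewrite !inE Hvj => /esym/eqP.
    subst j0.
    have := Heq v; rewrite (@lap_vertex _ k _ _ E x v _ Hj0) mul1r => /eqP.
    rewrite -subr_eq0 addrAC subrr add0r oppr_eq0 => /eqP Hp.
    have H0j : ord0 \in E j :\ v.
      by rewrite !inE eq_sym Hv0; case: Hs => H0 _ _ _; rewrite H0.
    move: Hp; rewrite (bigD1 ord0) //= => Hp.
    rewrite (bigD1 v) //= mulrCA.
    have -> : \prod_(i in E j :\ ord0 | i != v) x i
        = \prod_(i in E j :\ v | i != ord0) x i.
      by apply: eq_bigl => s; rewrite !inE; case: (s == v); case: (s == ord0); rewrite /= ?andbT ?andbF.
    by rewrite Hp mulr0.
  have HS : x ord0 * \sum_(j < d) \prod_(s in E j :\ ord0) x s = 0.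
    by rewrite mulr_sumr big1.
  have H0 := Heq ord0; rewrite /lap_act Hdeg0 mul1r in H0.
  rewrite (eq_bigl xpredT) in H0; last by move=> j; case: Hs => ->.
  have HS' : \sum_(j < d) \prod_(s in E j :\ ord0) x s
      = (d%:R - 1) * x ord0 ^+ k.-1.
    by move: H0; set a := x ord0 ^+ _; set S := \sum_(j < d) _ => H0; rewrite -[in LHS](subKr (d%:R * a) S) H0 mulrBl mul1r.
  have Hd1 : (d%:R - 1 : R) != 0.
    by rewrite subr_eq0 (_ : 1 = 1%:R) // eqr_nat; case: (d) Hd => [|[|]].
  have Hx0 : x ord0 = 0.
    move: HS; rewrite HS' mulrCA => /eqP; rewrite mulf_eq0 (negbTE Hd1) /=.
    rewrite -exprS expf_eq0 /= => /eqP //.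
  by split => //; rewrite HS' Hx0 expr0n (gtn_eqF Hm) mulr0.
- case=> Hx0 HS; split => // v.
  have Hz : 0 ^+ k.-1 = 0 :> R by rewrite expr0n (gtn_eqF Hm).
  case: (eqVneq v ord0) => [->|Hv].
    rewrite /lap_act Hdeg0 (eq_bigl xpredT); last by move=> j; case: Hs => ->.
    by rewrite HS Hx0 Hz mulr0 subr0 mulr0.
  have [j0 Hj0] := @uniq_edge _ _ _ E v Hs Hv.
  rewrite (@lap_vertex _ k _ _ E x v _ Hj0) mul1r.
  have H0j : ord0 \in E j0 :\ v.
    by rewrite !inE eq_sym Hv; case: Hs => H0 _ _ _; rewrite H0.
  by rewrite (bigD1 ord0) //= Hx0 mul0r subr0.
Qed.
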